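(* Let $x_1<x_2<\cdots<x_n$ be a partition of $[x_1,x_n]$, let $h_i=x_{i+1}-x_i$ for $i=1,\dots,n-1$, and $\hat h=\max_{1\le i\le n-1}h_i$. Let $f\in C^4([x_1,x_n])$ and let $L>0$ be such that $|f^{(4)}(x)|\le L$ for all $x\in[x_1,x_n]$. Write $f'_i=f'(x_i)$, $m_i=(f(x_{i+1})-f(x_i))/h_i$, $\lambda_i=\frac{h_{i+1}}{h_i+h_{i+1}}$ and $\mu_i=\frac{h_i}{h_i+h_{i+1}}$. Assume there exists $K>0$ such that $\hat h/h_j\le K$ for all $j=1,\dots,n-1$. For $2\le i\le n-1$ define $$R(i):=3\lambda_{i-1}m_{i-1}+3\mu_{i-1}m_i-\lambda_{i-1}f'_{i-1}-2f'_i-\mu_{i-1}f'_{i+1}.$$ Then for all $2\le i\le n-1$, $$|R(i)|\le\left(\frac{17K+K^2}{16}+1\right)L\,\hat h^3 .$$ *)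

(* Defs.v *)
From Stdlib Require Export Reals Lra Lia List.
Open Scope R_scope.

Definition deriv_within (a b : R) (g : R -> R) (x l : R) : Prop :=
  forall eps : R, 0 < eps -> exists delta : R, 0 < delta /\
    forall y : R, a <= y <= b -> y <> x -> Rabs (y - x) < delta ->
      Rabs ((g y - g x) / (y - x) - l) < eps.

Definition cont_within (a b : R) (g : R -> R) (x : R) : Prop :=
  forall eps : R, 0 < eps -> exists delta : R, 0 < delta /\
    forall y : R, a <= y <= b -> Rabs (y - x) < delta ->
      Rabs (g y - g x) < eps.

Definition C4_on (a b : R) (f f1 f2 f3 f4 : R -> R) : Prop :=
  forall t : R, a <= t <= b ->
    deriv_within a b f t (f1 t) /\
    deriv_within a b f1 t (f2 t) /\
    deriv_within a b f2 t (f3 t) /\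
    deriv_within a b f3 t (f4 t) /\
    cont_within a b f4 t.

(* Partition x_1 < ... < x_n (1-based indexing). *)
Definition hstep (x : nat -> R) (i : nat) : R := x (S i) - x i.

Definition hmax (x : nat -> R) (n : nat) : R :=
  fold_right Rmax 0 (map (hstep x) (seq 1 (n - 1))).

Definition slope (f : R -> R) (x : nat -> R) (i : nat) : R :=
  (f (x (S i)) - f (x i)) / hstep x i.

Definition lam (x : nat -> R) (i : nat) : R :=
  hstep x (S i) / (hstep x i + hstep x (S i)).

Definition mu (x : nat -> R) (i : nat) : R :=
  hstep x i / (hstep x i + hstep x (S i)).

Definition Rres (f f1 : R -> R) (x : nat -> R) (i : nat) : R :=
  3 * lam x (i - 1)%nat * slope f x (i - 1)%nat + 3 * mu x (i - 1)%nat * slope f x i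
  - lam x (i - 1)%nat * f1 (x (i - 1)%nat) - 2 * f1 (x i) - mu x (i - 1)%nat * f1 (x (S i)).

(* Main.v *)
Require Import Defs.
From Stdlib Require Import Reals Lra Lia List.
From Coquelicot Require Import Coquelicot.
Open Scope R_scope.

Lemma cw_of_dw A B g x l : A <= x <= B -> deriv_within A B g x l -> cont_within A B g x.
Proof.
  intros Hx H eps Heps.
  destruct (H 1 Rlt_0_1) as [d [Hd Hy]].
  assert (Hp : 0 < Rabs l + 1) by (pose proof (Rabs_pos l); lra).
  exists (Rmin d (eps / (Rabs l + 1))). split.
  { apply Rmin_pos; auto. apply Rdiv_lt_0_compat; lra. }
  intros y Hy1 Hy2.
  destruct (Req_dec y x) as [->|Hne].
  { replace (g x - g x) with 0 by ring. rewrite Rabs_R0; lra. }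
  assert (H1 : Rabs (y - x) < d) by (eapply Rlt_le_trans; [exact Hy2| apply Rmin_l]).
  assert (H2 : Rabs (y - x) < eps / (Rabs l + 1)) by (eapply Rlt_le_trans; [exact Hy2| apply Rmin_r]).
  specialize (Hy y Hy1 Hne H1).
  assert (Hyx : y - x <> 0) by lra.
  set (D := (g y - g x) / (y - x)) in *.
  assert (E : g y - g x = D * (y - x)) by (unfold D; field; auto).
  rewrite E, Rabs_mult.
  assert (HD : Rabs D <= Rabs l + 1).
  { replace D with ((D - l) + l) by ring. eapply Rle_trans. apply Rabs_triang. lra. }
  assert (Hpos : 0 < Rabs (y - x)) by (apply Rabs_pos_lt; auto).
  apply Rle_lt_trans with ((Rabs l + 1) * Rabs (y - x)).
  { apply Rmult_le_compat_r; lra. }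
  apply Rmult_lt_reg_r with (/ (Rabs l + 1)). apply Rinv_0_lt_compat; lra.
  replace ((Rabs l + 1) * Rabs (y - x) * / (Rabs l + 1)) with (Rabs (y - x)) by (field; lra).
  exact H2.
Qed.

Lemma mono A B p q (phi phi' : R -> R) :
  A <= p -> p < q -> q <= B ->
  (forall s, p <= s <= q -> deriv_within A B phi s (phi' s)) ->
  (forall s, p < s < q -> 0 <= phi' s) -> phi p <= phi q.
Proof.
  intros HA Hpq HB Hd Hpos.
  set (cl := fun y => Rmax p (Rmin q y)).
  assert (clid : forall s, p <= s <= q -> cl s = s).
  { intros s Hs; unfold cl, Rmax, Rmin; repeat destruct Rle_dec; lra. }
  assert (clin : forall y, p <= cl y <= q).
  { intros y; unfold cl, Rmax, Rmin; repeat destruct Rle_dec; lra. }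
  assert (cllip : forall y s, Rabs (cl y - cl s) <= Rabs (y - s)).
  { intros y s; unfold cl, Rmax, Rmin, Rabs; repeat destruct Rle_dec; repeat destruct Rcase_abs; lra. }
  destruct (MVT_gen (fun y => phi (cl y)) p q (fun s => Rmax 0 (phi' s))) as [c [Hc E]].
  - intros s Hs. rewrite Rmin_left, Rmax_right in Hs by lra.
    apply is_derive_Reals. rewrite Rmax_right by (apply Hpos; lra).
    intros eps Heps.
    destruct (Hd s ltac:(lra) eps Heps) as [d [Hd0 Hy]].
    assert (Hm : 0 < Rmin d (Rmin (s - p) (q - s))) by (repeat apply Rmin_pos; lra).
    exists (mkposreal _ Hm). intros h Hh0 Hh. simpl in Hh.
    assert (h1 : Rabs h < d) by (eapply Rlt_le_trans; [exact Hh| apply Rmin_l]).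
    assert (h2 : Rabs h < Rmin (s - p) (q - s)) by (eapply Rlt_le_trans; [exact Hh| apply Rmin_r]).
    assert (h3 : Rabs h < s - p) by (eapply Rlt_le_trans; [exact h2| apply Rmin_l]).
    assert (h4 : Rabs h < q - s) by (eapply Rlt_le_trans; [exact h2| apply Rmin_r]).
    apply Rabs_def2 in h3. apply Rabs_def2 in h4.
    rewrite (clid (s + h)) by lra. rewrite (clid s) by lra.
    specialize (Hy (s + h) ltac:(lra) ltac:(lra)).
    replace (s + h - s) with h in Hy by ring. apply Hy. exact h1.
  - intros s Hs. rewrite Rmin_left, Rmax_right in Hs by lra.
    unfold continuity_pt, continue_in, limit1_in, limit_in. intros eps Heps.
    destruct (cw_of_dw A B phi s (phi' s) ltac:(lra) (Hd s Hs) eps Heps) as [d [Hd0 Hy]].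
    exists d; split; auto. intros y [_ Hyd]. simpl in Hyd. unfold R_dist in Hyd.
    simpl. unfold R_dist. rewrite (clid s Hs).
    apply Hy. specialize (clin y); lra.
    eapply Rle_lt_trans. 2: exact Hyd. rewrite <- (clid s Hs) at 1. apply cllip.
  - simpl in E. rewrite (clid p), (clid q) in E by lra.
    assert (0 <= Rmax 0 (phi' c)) by apply Rmax_l.
    assert (0 <= Rmax 0 (phi' c) * (q - p)) by (apply Rmult_le_pos; lra). lra.
Qed.

Lemma dw_comb A B g P x l m c : deriv_within A B g x l -> derivable_pt_lim P x m ->
  deriv_within A B (fun y => P y + c * g y) x (m + c * l).
Proof.
  intros Hg HP eps Heps.
  assert (Hc : 0 < Rabs c + 1) by (pose proof (Rabs_pos c); lra).
  destruct (Hg (eps / 2 / (Rabs c + 1))) as [d1 [Hd1 H1]].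
  { apply Rdiv_lt_0_compat; lra. }
  destruct (HP (eps / 2)) as [d2 H2]; [lra|].
  exists (Rmin d1 d2); split. { apply Rmin_pos; auto. apply cond_pos. }
  intros y Hy Hne Hyd.
  assert (a1 : Rabs (y - x) < d1) by (eapply Rlt_le_trans; [exact Hyd| apply Rmin_l]).
  assert (a2 : Rabs (y - x) < d2) by (eapply Rlt_le_trans; [exact Hyd| apply Rmin_r]).
  specialize (H1 y Hy Hne a1).
  specialize (H2 (y - x) ltac:(lra) a2).
  replace (x + (y - x)) with y in H2 by ring.
  assert (Hyx : y - x <> 0) by lra.
  replace ((P y + c * g y - (P x + c * g x)) / (y - x) - (m + c * l))
    with (((P y - P x) / (y - x) - m) + c * ((g y - g x) / (y - x) - l)) by (field; auto).
  eapply Rle_lt_trans. apply Rabs_triang. rewrite Rabs_mult.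
  assert (Rabs c * Rabs ((g y - g x) / (y - x) - l) <= (Rabs c + 1) * (eps / 2 / (Rabs c + 1))).
  { apply Rmult_le_compat; try apply Rabs_pos; lra. }
  replace ((Rabs c + 1) * (eps / 2 / (Rabs c + 1))) with (eps / 2) in H by (field; lra).
  lra.
Qed.

Lemma bound A B p q g g' P P' G G' :
  A <= p -> p <= q -> q <= B ->
  (forall s, p <= s <= q -> deriv_within A B g s (g' s)) ->
  (forall s, derivable_pt_lim P s (P' s)) -> (forall s, derivable_pt_lim G s (G' s)) ->
  (forall s, p < s < q -> Rabs (g' s - P' s) <= G' s) ->
  Rabs ((g q - P q) - (g p - P p)) <= G q - G p.
Proof.
  intros HA Hpq HB Hg HP HG Hb.
  destruct (Req_dec p q) as [<-|Hne].
  { replace (g p - P p - (g p - P p)) with 0 by ring. rewrite Rabs_R0; lra. }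
  assert (X1 : (fun y => (G y + P y) + (-1) * g y) p <= (fun y => (G y + P y) + (-1) * g y) q).
  { refine (mono A B p q (fun y => (G y + P y) + (-1) * g y) (fun s => (G' s + P' s) + (-1) * g' s) _ _ _ _ _); try lra.
    - intros s Hs. apply dw_comb. apply Hg; auto. apply derivable_pt_lim_plus; auto.
    - intros s Hs. specialize (Hb s Hs). apply Rabs_le_between in Hb. lra. }
  assert (X2 : (fun y => (G y - P y) + 1 * g y) p <= (fun y => (G y - P y) + 1 * g y) q).
  { refine (mono A B p q (fun y => (G y - P y) + 1 * g y) (fun s => (G' s - P' s) + 1 * g' s) _ _ _ _ _); try lra.
    - intros s Hs. apply dw_comb. apply Hg; auto. apply derivable_pt_lim_minus; auto.
    - intros s Hs. specialize (Hb s Hs). apply Rabs_le_between in Hb. lra. }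
  simpl in X1, X2. apply Rabs_le. lra.
Qed.

Lemma conv a a' v v' : Rabs a <= v -> a' = a \/ a' = - a -> v = v' -> Rabs a' <= v'.
Proof. intros H [->| ->] <-; auto. rewrite Rabs_Ropp; auto. Qed.

Ltac dpl := intros; apply is_derive_Reals; auto_derive; [auto | field].
Ltac dc C4 := let s := fresh "s" in let Hs := fresh "Hs" in
  intros s Hs; destruct (C4 s ltac:(lra)) as (?&?&?&?&?); auto.

Lemma taylor_f A B b q f f1 f2 f3 f4 L :
  A <= b -> b <= q -> q <= B -> C4_on A B f f1 f2 f3 f4 ->
  (forall t, b <= t <= q -> Rabs (f4 t) <= L) ->
  forall t, b <= t <= q ->
  Rabs (f1 t - (f1 b + f2 b * (t-b) + f3 b * (t-b)^2/2)) <= L*(t-b)^3/6 /\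
  Rabs (f t - (f b + f1 b*(t-b) + f2 b*(t-b)^2/2 + f3 b*(t-b)^3/6)) <= L*(t-b)^4/24.
Proof.
  intros HA Hbq HB C4 HL.
  assert (S3 : forall t, b <= t <= q -> Rabs (f3 t - f3 b) <= L*(t-b)).
  { intros t Ht. eapply conv; [apply (bound A B b t f3 f4 (fun _ => f3 b) (fun _ => 0) (fun y => L*(y-b)) (fun _ => L));
      [lra|lra|lra|dc C4|dpl|dpl| intros s Hs; replace (f4 s - 0) with (f4 s) by ring; apply HL; lra]
      | left; ring | field]. }
  assert (S2 : forall t, b <= t <= q -> Rabs (f2 t - (f2 b + f3 b * (t-b))) <= L*(t-b)^2/2).
  { intros t Ht. eapply conv; [apply (bound A B b t f2 f3 (fun y => f2 b + f3 b * (y-b)) (fun _ => f3 b) (fun y => L*(y-b)^2/2) (fun y => L*(y-b)));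
      [lra|lra|lra|dc C4|dpl|dpl| intros s Hs; apply S3; lra]
      | left; ring | field]. }
  assert (S1 : forall t, b <= t <= q -> Rabs (f1 t - (f1 b + f2 b * (t-b) + f3 b * (t-b)^2/2)) <= L*(t-b)^3/6).
  { intros t Ht. eapply conv; [apply (bound A B b t f1 f2 (fun y => f1 b + f2 b * (y-b) + f3 b * (y-b)^2/2) (fun y => f2 b + f3 b * (y-b)) (fun y => L*(y-b)^3/6) (fun y => L*(y-b)^2/2));
      [lra|lra|lra|dc C4|dpl|dpl| intros s Hs; apply S2; lra]
      | left; field | field]. }
  intros t Ht; split; [apply S1; lra|].
  eapply conv; [apply (bound A B b t f f1 (fun y => f b + f1 b*(y-b) + f2 b*(y-b)^2/2 + f3 b*(y-b)^3/6) (fun y => f1 b + f2 b * (y-b) + f3 b * (y-b)^2/2) (fun y => L*(y-b)^4/24) (fun y => L*(y-b)^3/6));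
      [lra|lra|lra|dc C4|dpl|dpl| intros s Hs; apply S1; lra]
      | left; field | field].
Qed.

Lemma taylor_b A B b p f f1 f2 f3 f4 L :
  A <= p -> p <= b -> b <= B -> C4_on A B f f1 f2 f3 f4 ->
  (forall t, p <= t <= b -> Rabs (f4 t) <= L) ->
  forall t, p <= t <= b ->
  Rabs (f1 t - (f1 b + f2 b * (t-b) + f3 b * (t-b)^2/2)) <= L*(b-t)^3/6 /\
  Rabs (f t - (f b + f1 b*(t-b) + f2 b*(t-b)^2/2 + f3 b*(t-b)^3/6)) <= L*(b-t)^4/24.
Proof.
  intros HA Hbq HB C4 HL.
  assert (S3 : forall t, p <= t <= b -> Rabs (f3 t - f3 b) <= L*(b-t)).
  { intros t Ht. eapply conv; [apply (bound A B t b f3 f4 (fun _ => f3 b) (fun _ => 0) (fun y => -(L*(b-y))) (fun _ => L));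
      [lra|lra|lra|dc C4|dpl|dpl| intros s Hs; replace (f4 s - 0) with (f4 s) by ring; apply HL; lra]
      | right; ring | field]. }
  assert (S2 : forall t, p <= t <= b -> Rabs (f2 t - (f2 b + f3 b * (t-b))) <= L*(b-t)^2/2).
  { intros t Ht. eapply conv; [apply (bound A B t b f2 f3 (fun y => f2 b + f3 b * (y-b)) (fun _ => f3 b) (fun y => -(L*(b-y)^2/2)) (fun y => L*(b-y)));
      [lra|lra|lra|dc C4|dpl|dpl| intros s Hs; apply S3; lra]
      | right; ring | field]. }
  assert (S1 : forall t, p <= t <= b -> Rabs (f1 t - (f1 b + f2 b * (t-b) + f3 b * (t-b)^2/2)) <= L*(b-t)^3/6).
  { intros t Ht. eapply conv; [apply (bound A B t b f1 f2 (fun y => f1 b + f2 b * (y-b) + f3 b * (y-b)^2/2) (fun y => f2 b + f3 b * (y-b)) (fun y => -(L*(b-y)^3/6)) (fun y => L*(b-y)^2/2));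
      [lra|lra|lra|dc C4|dpl|dpl| intros s Hs; apply S2; lra]
      | right; field | field]. }
  intros t Ht; split; [apply S1; lra|].
  eapply conv; [apply (bound A B t b f f1 (fun y => f b + f1 b*(y-b) + f2 b*(y-b)^2/2 + f3 b*(y-b)^3/6) (fun y => f1 b + f2 b * (y-b) + f3 b * (y-b)^2/2) (fun y => -(L*(b-y)^4/24)) (fun y => L*(b-y)^3/6));
      [lra|lra|lra|dc C4|dpl|dpl| intros s Hs; apply S1; lra]
      | right; field | field].
Qed.

Lemma fold_max l a : In a l -> a <= fold_right Rmax 0 l.
Proof.
  induction l as [|y l IH]; simpl; [tauto|].
  intros [<-|H]; [apply Rmax_l|]. eapply Rle_trans; [apply IH; auto| apply Rmax_r].
Qed.

Lemma hmax_ge x n j : (1 <= j)%nat -> (j <= n - 1)%nat -> hstep x j <= hmax x n.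
Proof.
  intros H1 H2. unfold hmax. apply fold_max. apply in_map. apply in_seq. lia.
Qed.

Lemma xmono n (x : nat -> R) : (forall i, (1 <= i)%nat -> (i < n)%nat -> x i < x (S i)) ->
  forall j k, (1 <= j)%nat -> (j <= k)%nat -> (k <= n)%nat -> x j <= x k.
Proof.
  intros H j k. induction k; intros; [lia|].
  destruct (Nat.eq_dec j (S k)) as [->|]; [lra|].
  apply Rle_trans with (x k). apply IHk; lia. left; apply H; lia.
Qed.

Theorem lemma2 (n : nat) (x : nat -> R) (f f1 f2 f3 f4 : R -> R) (L K : R) :
  (forall i : nat, (1 <= i)%nat -> (i < n)%nat -> x i < x (S i)) ->
  C4_on (x 1%nat) (x n) f f1 f2 f3 f4 ->
  0 < L ->
  (forall t : R, x 1%nat <= t <= x n -> Rabs (f4 t) <= L) ->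
  0 < K ->
  (forall j : nat, (1 <= j)%nat -> (j <= n - 1)%nat -> hmax x n / hstep x j <= K) ->
  forall i : nat, (2 <= i)%nat -> (i <= n - 1)%nat ->
    Rabs (Rres f f1 x i) <= ((17 * K + K ^ 2) / 16 + 1) * L * (hmax x n) ^ 3.
Proof.
  intros Hx C4 HL HfL HK HKj i Hi2 Hin.
  destruct i as [|j]; [lia|].
  unfold Rres. replace (S j - 1)%nat with j by lia.
  set (H := hmax x n).
  assert (hH : hstep x j <= H) by (apply hmax_ge; lia).
  assert (kH : hstep x (S j) <= H) by (apply hmax_ge; lia).
  unfold slope, lam, mu in *. unfold hstep in *.
  set (a := x j) in *. set (b := x (S j)) in *. set (c := x (S (S j))) in *.
  assert (hab : a < b) by (apply Hx; lia).
  assert (hbc : b < c) by (apply Hx; lia).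
  assert (x1a : x 1%nat <= a) by (apply (xmono n); auto; lia).
  assert (cxn : c <= x n) by (apply (xmono n); auto; lia).
  destruct (taylor_b (x 1%nat) (x n) b a f f1 f2 f3 f4 L) with (t := a) as [A1 A0]; try lra; try exact C4.
  { intros t Ht; apply HfL; lra. }
  destruct (taylor_f (x 1%nat) (x n) b c f f1 f2 f3 f4 L) with (t := c) as [C1 C0]; try lra; try exact C4.
  { intros t Ht; apply HfL; lra. }
  set (r0a := f a - (f b + f1 b * (a - b) + f2 b * (a - b) ^ 2 / 2 + f3 b * (a - b) ^ 3 / 6)) in *.
  set (r1a := f1 a - (f1 b + f2 b * (a - b) + f3 b * (a - b) ^ 2 / 2)) in *.
  set (r0c := f c - (f b + f1 b * (c - b) + f2 b * (c - b) ^ 2 / 2 + f3 b * (c - b) ^ 3 / 6)) in *.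
  set (r1c := f1 c - (f1 b + f2 b * (c - b) + f3 b * (c - b) ^ 2 / 2)) in *.
  set (h := b - a) in *. set (k := c - b) in *.
  assert (hp : 0 < h) by (unfold h; lra). assert (kp : 0 < k) by (unfold k; lra).
  assert (Eq : 3 * (k / (h + k)) * ((f b - f a) / h) + 3 * (h / (h + k)) * ((f c - f b) / k) -
     k / (h + k) * f1 a - 2 * f1 b - h / (h + k) * f1 c
     = ((-(3*k/h)*r0a + (3*h/k)*r0c) + (-k*r1a + -h*r1c)) / (h+k)).
  { unfold r0a, r1a, r0c, r1c. replace a with (b - h) by (unfold h; ring).
    replace c with (b + k) by (unfold k; ring). field. lra. }
  rewrite Eq.
  assert (T1 : Rabs (-(3*k/h)*r0a) <= k*L*h^3/8).
  { rewrite Rabs_mult, Rabs_Ropp, (Rabs_right (3*k/h)) by (apply Rle_ge; apply Rlt_le, Rdiv_lt_0_compat; lra).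
    eapply Rle_trans. apply Rmult_le_compat_l. apply Rlt_le, Rdiv_lt_0_compat; lra. exact A0.
    right. replace (b - a) with h by reflexivity. field. lra. }
  assert (T2 : Rabs ((3*h/k)*r0c) <= h*L*k^3/8).
  { rewrite Rabs_mult, (Rabs_right (3*h/k)) by (apply Rle_ge; apply Rlt_le, Rdiv_lt_0_compat; lra).
    eapply Rle_trans. apply Rmult_le_compat_l. apply Rlt_le, Rdiv_lt_0_compat; lra. exact C0.
    right. field. lra. }
  assert (T3 : Rabs (-k*r1a) <= k*L*h^3/6).
  { rewrite Rabs_mult, Rabs_Ropp, (Rabs_right k) by lra.
    eapply Rle_trans. apply Rmult_le_compat_l. lra. exact A1. right. unfold h. field. }
  assert (T4 : Rabs (-h*r1c) <= h*L*k^3/6).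
  { rewrite Rabs_mult, Rabs_Ropp, (Rabs_right h) by lra.
    eapply Rle_trans. apply Rmult_le_compat_l. lra. exact C1. right. field. }
  assert (h3 : h^3 <= H^3) by (apply pow_incr; lra).
  assert (k3 : k^3 <= H^3) by (apply pow_incr; lra).
  assert (S : k*L*h^3/8 + h*L*k^3/8 + (k*L*h^3/6 + h*L*k^3/6) <= 7/24 * L * H^3 * (h+k)).
  { assert (k*(L*h^3) <= k*(L*H^3)) by (apply Rmult_le_compat_l; [lra| apply Rmult_le_compat_l; lra]).
    assert (h*(L*k^3) <= h*(L*H^3)) by (apply Rmult_le_compat_l; [lra| apply Rmult_le_compat_l; lra]).
    lra. }
  rewrite Rabs_div by lra. rewrite (Rabs_right (h+k)) by lra.
  apply Rle_trans with (7/24 * L * H^3).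
  { apply Rmult_le_reg_r with (h+k). lra.
    replace (Rabs (- (3 * k / h) * r0a + 3 * h / k * r0c + (- k * r1a + - h * r1c)) / (h + k) * (h + k))
      with (Rabs (- (3 * k / h) * r0a + 3 * h / k * r0c + (- k * r1a + - h * r1c))) by (field; lra).
    eapply Rle_trans. apply Rabs_triang.
    eapply Rle_trans. apply Rplus_le_compat; apply Rabs_triang. lra. }
  assert (0 <= L * H^3) by (apply Rmult_le_pos; [lra| apply pow_le; lra]).
  assert (7/24 <= (17 * K + K ^ 2) / 16 + 1) by (assert (0 < K^2) by (apply pow_lt; lra); lra).
  replace (7/24 * L * H^3) with (7/24 * (L * H^3)) by ring.
  replace (((17 * K + K ^ 2) / 16 + 1) * L * H ^ 3) with (((17 * K + K ^ 2) / 16 + 1) * (L * H ^ 3)) by ring.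
  apply Rmult_le_compat_r; lra.
Qed.
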